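(* Let $G$ be a profinitely rigid profinite group and $M$ a finite continuous $G$-module. Then the comparison map $\varphi^2:H^2_{\mathrm{con}}(G,M)\to H^2_{\mathrm{abs}}(G,M)$ is surjective if and only if every abstract group extension $1\to M\to H\to G\to 1$ (inducing the given action of $G$ on $M$) is of profinite type.
   Context: A profinite group is profinitely rigid if its underlying abstract group admits exactly one topology making it a profinite group. An abstract group is of profinite type if it admits such a topology. $\varphi^2$ is the natural map from continuous cohomology to the cohomology of the underlying abstract group. *)

(* Defs.v *)
From Stdlib Require List.
From mathcomp Require Import all_boot all_algebra.
Set Implicit Arguments.
Unset Strict Implicit.
Unset Printing Implicit Defensive.
Import GRing.Theory.
Local Open Scope ring_scope.

Record Grp := {
  gcarrier :> Type;
  gmul : gcarrier -> gcarrier -> gcarrier;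
  gone : gcarrier;
  ginv : gcarrier -> gcarrier;
  gmulA : forall x y z, gmul x (gmul y z) = gmul (gmul x y) z;
  gmul1 : forall x, gmul gone x = x;
  gmulV : forall x, gmul (ginv x) x = gone
}.

Definition is_topology (T : Type) (op : (T -> Prop) -> Prop) : Prop :=
  op (fun _ => True) /\ op (fun _ => False) /\
  (forall (I : Type) (U : I -> T -> Prop), (forall i, op (U i)) ->
     op (fun x => exists i, U i x)) /\
  (forall U V, op U -> op V -> op (fun x => U x /\ V x)).

Definition prod_open (T T' : Type) (op : (T -> Prop) -> Prop)
  (op' : (T' -> Prop) -> Prop) (W : T -> T' -> Prop) : Prop :=
  forall x y, W x y -> exists A B, op A /\ op' B /\ A x /\ B y /\
     (forall a b, A a -> B b -> W a b).

Definition compact (T : Type) (op : (T -> Prop) -> Prop) : Prop :=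
  forall (I : Type) (U : I -> T -> Prop), (forall i, op (U i)) ->
    (forall x, exists i, U i x) ->
    exists s : list I, forall x, exists i, List.In i s /\ U i x.

Definition hausdorff (T : Type) (op : (T -> Prop) -> Prop) : Prop :=
  forall x y : T, x <> y -> exists U V, op U /\ op V /\ U x /\ V y /\
    (forall z, ~ (U z /\ V z)).

Definition connected_subset (T : Type) (op : (T -> Prop) -> Prop)
  (S : T -> Prop) : Prop :=
  ~ exists U V, op U /\ op V /\ (forall x, S x -> U x \/ V x) /\
      (exists x, S x /\ U x) /\ (exists x, S x /\ V x) /\
      (forall x, ~ (S x /\ U x /\ V x)).

Definition totally_disconnected (T : Type) (op : (T -> Prop) -> Prop) : Prop :=
  forall S, connected_subset op S -> forall x y, S x -> S y -> x = y.

Definition profinite_topology (G : Grp) (op : (G -> Prop) -> Prop) : Prop :=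
  is_topology op /\ compact op /\ hausdorff op /\ totally_disconnected op /\
  (forall U, op U -> prod_open op op (fun x y => U (gmul x y))) /\
  (forall U, op U -> op (fun x => U (ginv x))).

Definition profinitely_rigid (G : Grp) (op : (G -> Prop) -> Prop) : Prop :=
  profinite_topology op /\
  forall op', profinite_topology op' -> forall U, op' U <-> op U.

Definition of_profinite_type (H : Grp) : Prop :=
  exists op : (H -> Prop) -> Prop, profinite_topology op.

Definition is_Gmodule (G : Grp) (M : finZmodType) (act : G -> M -> M) : Prop :=
  (forall g x y, act g (x + y) = act g x + act g y) /\
  (forall x, act (gone G) x = x) /\
  (forall g h x, act (gmul g h) x = act g (act h x)).

(* continuity of G x M -> M, with M discrete *)
Definition continuous_action (G : Grp) (op : (G -> Prop) -> Prop)
  (M : finZmodType) (act : G -> M -> M) : Prop :=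
  forall m m' : M, op (fun g => act g m = m').

Definition cocycle2 (G : Grp) (M : finZmodType) (act : G -> M -> M)
  (f : G -> G -> M) : Prop :=
  forall g h k, act g (f h k) - f (gmul g h) k + f g (gmul h k) - f g h = 0.

Definition coboundary1 (G : Grp) (M : finZmodType) (act : G -> M -> M)
  (c : G -> M) : G -> G -> M :=
  fun g h => act g (c h) - c (gmul g h) + c g.

(* continuous 2-cochain G x G -> M (M discrete) *)
Definition continuous_cochain2 (G : Grp) (op : (G -> Prop) -> Prop)
  (M : finZmodType) (f : G -> G -> M) : Prop :=
  forall m : M, prod_open op op (fun g h => f g h = m).

(* phi^2 : H^2_con(G,M) -> H^2_abs(G,M), [f] |-> [f], is surjective:
   every abstract 2-cocycle is cohomologous (via an abstract 1-cochain)
   to a continuous 2-cocycle. *)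
Definition phi2_surjective (G : Grp) (op : (G -> Prop) -> Prop)
  (M : finZmodType) (act : G -> M -> M) : Prop :=
  forall f : G -> G -> M, cocycle2 act f ->
    exists (f' : G -> G -> M) (c : G -> M),
      continuous_cochain2 op f' /\ cocycle2 act f' /\
      forall g h, f g h = f' g h + coboundary1 act c g h.

Definition is_extension (G : Grp) (M : finZmodType) (act : G -> M -> M)
  (H : Grp) (i : M -> H) (p : H -> G) : Prop :=
  (forall x y, i (x + y) = gmul (i x) (i y)) /\
  (forall x y, i x = i y -> x = y) /\
  (forall a b, p (gmul a b) = gmul (p a) (p b)) /\
  (forall g, exists a, p a = g) /\
  (forall a, p a = gone G <-> exists m, i m = a) /\
  (forall a m, i (act (p a) m) = gmul (gmul a (i m)) (ginv a)).

Definition every_extension_profinite_type (G : Grp) (M : finZmodType)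
  (act : G -> M -> M) : Prop :=
  forall (H : Grp) (i : M -> H) (p : H -> G),
    is_extension act i p -> of_profinite_type H.

(* Main.v *)
Require Import Defs.
From mathcomp Require Import all_boot all_algebra.
From Stdlib Require Import Classical ClassicalEpsilon FunctionalExtensionality PropExtensionality.
From Stdlib Require List.
Set Implicit Arguments.
Unset Strict Implicit.
Unset Printing Implicit Defensive.
Import GRing.Theory.

Local Notation "x ⋆ y" := (gmul x y) (at level 40, left associativity).


Section Topo.
Variable T : Type.
Variable op : (T -> Prop) -> Prop.
Hypothesis Htop : is_topology op.

Lemma op_ext (U V : T -> Prop) : op U -> (forall x, U x <-> V x) -> op V.
Proof.
move=> oU e; have -> : V = U; last by [].
by apply: functional_extensionality => x; apply: propositional_extensionality; split => /e.
Qed.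

Lemma op_True : op (fun _ => True). Proof. by case: Htop. Qed.
Lemma op_False : op (fun _ => False). Proof. by case: Htop => _ []. Qed.
Lemma op_union (I : Type) (U : I -> T -> Prop) :
  (forall i, op (U i)) -> op (fun x => exists i, U i x).
Proof. by case: Htop => _ [] _ [] H _; apply: H. Qed.
Lemma op_inter U V : op U -> op V -> op (fun x => U x /\ V x).
Proof. by case: Htop => _ [] _ [] _ H; apply: H. Qed.

Lemma op_local (P : T -> Prop) :
  (forall x, P x -> exists U, op U /\ U x /\ forall y, U y -> P y) -> op P.
Proof.
move=> H.
pose I := {U : T -> Prop | op U /\ forall y, U y -> P y}.
apply: (@op_ext (fun x => exists i : I, sval i x)).
  by apply: op_union => -[U [oU ?]].
move=> x; split; first by case=> -[U [_ HU]] /= Ux; apply: HU.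
move=> /H [U [oU [Ux HU]]].
by exists (exist _ U (conj oU HU)).
Qed.

Lemma op_finter (I : Type) (l : list I) (U : I -> T -> Prop) :
  (forall i, List.In i l -> op (U i)) ->
  op (fun x => forall i, List.In i l -> U i x).
Proof.
elim: l => [|a l IH] H.
  by eapply op_ext; [exact: op_True|] => x; split => // _ i [].
apply: (@op_ext (fun x => U a x /\ (forall i, List.In i l -> U i x))).
  apply: op_inter; first by apply: H; left.
  by apply: IH => i Hi; apply: H; right.
move=> x; split.
  by case=> Ha Hl i [<-|Hi] //; apply: Hl.
by move=> Hx; split; [apply: Hx; left | move=> i Hi; apply: Hx; right].
Qed.

Lemma op_funion (I : Type) (l : list I) (U : I -> T -> Prop) :
  (forall i, List.In i l -> op (U i)) ->
  op (fun x => exists i, List.In i l /\ U i x).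
Proof.
move=> H; apply: op_local => x [i [Hi Ux]].
exists (U i); split; first by apply: H.
by split => // y Uy; exists i.
Qed.

Definition closed (F : T -> Prop) := op (fun x => ~ F x).
Definition clopen (C : T -> Prop) := op C /\ closed C.

Lemma clopen_compl C : clopen C -> clopen (fun x => ~ C x).
Proof.
case=> oC cC; split => //.
by rewrite /closed; eapply op_ext; [exact: oC|] => x /=; split => [? ?|/NNPP].
Qed.

Lemma clopen_finter (I : Type) (l : list I) (C : I -> T -> Prop) :
  (forall i, List.In i l -> clopen (C i)) ->
  clopen (fun x => forall i, List.In i l -> C i x).
Proof.
move=> H; split; first by apply: op_finter => i /H [].
apply: (@op_ext (fun x => exists i, List.In i l /\ ~ C i x)).
  by apply: op_funion => i /H [].
move=> x; split.
  by case=> i [Hi nC] Hx; apply: nC; apply: Hx.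
move=> nH; apply: NNPP => nE; apply: nH => i Hi.
by apply: NNPP => nC; apply: nE; exists i.
Qed.

Lemma clopen_funion (I : Type) (l : list I) (C : I -> T -> Prop) :
  (forall i, List.In i l -> clopen (C i)) ->
  clopen (fun x => exists i, List.In i l /\ C i x).
Proof.
move=> H.
have H' : forall i, List.In i l -> clopen (fun x => ~ C i x).
  by move=> i /H /clopen_compl.
have /clopen_compl := clopen_finter H'.
move=> [o c]; split.
  eapply op_ext; [exact: o|] => x; split.
    by move=> nH; apply: NNPP => nE; apply: nH => i Hi Ci; apply: nE; exists i.
  by case=> i [Hi Ci] Hx; apply: (Hx i Hi).
eapply op_ext; [exact: c|] => x; split.
  by move=> nn [i [Hi Ci]]; apply: nn => Hx; apply: (Hx i Hi).
by move=> nE nH; apply: nH => i Hi Ci; apply: nE; exists i.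
Qed.

Lemma clopen_inter C D : clopen C -> clopen D -> clopen (fun x => C x /\ D x).
Proof.
move=> [oC cC] [oD cD]; split; first by apply: op_inter.
apply: (@op_ext (fun x => exists b : bool, if b then ~ C x else ~ D x)).
  by apply: op_union => -[].
move=> x; split.
  by case=> -[] H [? ?].
move=> H; case: (classic (C x)) => Cx.
  by exists false => Dx; apply: H.
by exists true.
Qed.

Hypothesis Hc : compact op.

Lemma compact_closed (F : T -> Prop) (I : Type) (U : I -> T -> Prop) :
  closed F -> (forall i, op (U i)) -> (forall x, F x -> exists i, U i x) ->
  exists l : list I, forall x, F x -> exists i, List.In i l /\ U i x.
Proof.
move=> cF oU cov.
pose U' (o : option I) := match o with Some i => U i | None => fun x => ~ F x end.
have [l Hl] : exists l : list (option I), forall x, exists o, List.In o l /\ U' o x.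
  apply: Hc; first by case.
  move=> x; case: (classic (F x)) => Fx.
    by have [i Ui] := cov x Fx; exists (Some i).
  by exists None.
exists (List.flat_map (fun o => match o with Some i => i :: nil | None => nil end) l).
move=> x Fx; have [[i|] [Hi Ui]] := Hl x; last by case: Ui.
exists i; split => //; apply/List.in_flat_map; exists (Some i); split => //; by left.
Qed.

Hypothesis Hh : hausdorff op.

Lemma sep_pt_closed x F : closed F -> ~ F x ->
  exists A B, op A /\ op B /\ A x /\ (forall y, F y -> B y) /\
              (forall z, ~ (A z /\ B z)).
Proof.
move=> cF nFx.
pose I := {p : (T -> Prop) * (T -> Prop) |
            op p.1 /\ op p.2 /\ p.1 x /\ forall z, ~ (p.1 z /\ p.2 z)}.
have [l Hl] : exists l : list I, forall y, F y -> exists i, List.In i l /\ (sval i).2 y.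
  apply: (@compact_closed F I (fun i => (sval i).2) cF (fun i => proj1 (proj2 (svalP i)))).
  move=> y Fy; have xy : x <> y by move=> e; apply: nFx; rewrite e.
  have [U [V [oU [oV [Ux [Vy d]]]]]] := Hh xy.
  by exists (exist _ (U, V) (conj oU (conj oV (conj Ux d)))).
exists (fun z => forall i, List.In i l -> (sval i).1 z).
exists (fun z => exists i, List.In i l /\ (sval i).2 z).
split; first by apply: op_finter => i _; case: (svalP i).
split; first by apply: op_funion => i _; case: (svalP i) => _ [].
split; first by move=> i _; case: (svalP i) => _ [] _ [].
split => //.
move=> z [HA [i [Hi HB]]].
by case: (svalP i) => _ [] _ [] _ d; apply: (d z); split => //; apply: HA.
Qed.

Lemma sep_closed_closed F K : closed F -> closed K -> (forall x, ~ (F x /\ K x)) ->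
  exists A B, op A /\ op B /\ (forall x, F x -> A x) /\ (forall y, K y -> B y) /\
              (forall z, ~ (A z /\ B z)).
Proof.
move=> cF cK dFK.
pose I := {p : (T -> Prop) * (T -> Prop) |
            op p.1 /\ op p.2 /\ (forall y, K y -> p.2 y) /\ forall z, ~ (p.1 z /\ p.2 z)}.
have [l Hl] : exists l : list I, forall y, F y -> exists i, List.In i l /\ (sval i).1 y.
  apply: (@compact_closed F I (fun i => (sval i).1) cF (fun i => proj1 (svalP i))).
  move=> x Fx; have nKx : ~ K x by move=> Kx; apply: (dFK x).
  have [A [B [oA [oB [Ax [KB d]]]]]] := sep_pt_closed cK nKx.
  by exists (exist _ (A, B) (conj oA (conj oB (conj KB d)))).
exists (fun z => exists i, List.In i l /\ (sval i).1 z).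
exists (fun z => forall i, List.In i l -> (sval i).2 z).
split; first by apply: op_funion => i _; case: (svalP i).
split; first by apply: op_finter => i _; case: (svalP i) => _ [].
split => //.
split; first by move=> y Ky i _; case: (svalP i) => _ [] _ [] H _; apply: H.
move=> z [[i [Hi HA]] HB].
by case: (svalP i) => _ [] _ [] _ d; apply: (d z); split => //; apply: HB.
Qed.

Hypothesis Htd : totally_disconnected op.

Lemma zero_dim x y : x <> y -> exists C, clopen C /\ C x /\ ~ C y.
Proof.
move=> xy; apply: NNPP => nC.
pose Q z := forall C, clopen C -> C x -> C z.
have Qx : Q x by [].
have Qy : Q y.
  move=> C clC Cx; apply: NNPP => nCy; apply: nC; by exists C.
have cQ : closed Q.
  apply: op_local => z nQz.
  have [C [clC [Cx nCz]]] : exists C, clopen C /\ C x /\ ~ C z.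
    apply: NNPP => nE; apply: nQz => C clC Cx; apply: NNPP => nCz; apply: nE.
    by exists C.
  exists (fun w => ~ C w); split; first by case: clC.
  by split => // w nCw Qw; apply: nCw; apply: Qw.
suff conQ : connected_subset op Q by apply: xy; apply: (Htd conQ).
move=> [U [V [oU [oV [cov [[a [Qa Ua]] [[b [Qb Vb]] dis]]]]]]].
(* wlog x in U *)
have key : forall U V : T -> Prop, op U -> op V -> (forall z, Q z -> U z \/ V z) ->
    (forall z, ~ (Q z /\ U z /\ V z)) -> U x -> forall b, Q b -> V b -> False.
  clear U V oU oV cov a Qa Ua b Qb Vb dis.
  move=> U V oU oV cov dis Ux b Qb Vb.
  pose A z := Q z /\ ~ V z.
  pose B z := Q z /\ ~ U z.
  have cA : closed A.
    apply: (@op_ext (fun z => ~ Q z \/ V z)).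
      apply: (@op_ext (fun z => exists c : bool, if c then ~ Q z else V z)).
        by apply: op_union => -[].
      by move=> z; split; [case=> -[] ?; [left|right] | case=> ?; [exists true|exists false]].
    move=> z; split; first by case=> [nQ [Qz _]|Vz [_ nV]] //.
    move=> nA; case: (classic (Q z)) => Qz; last by left.
    by right; apply: NNPP => nV; apply: nA.
  have cB : closed B.
    apply: (@op_ext (fun z => ~ Q z \/ U z)).
      apply: (@op_ext (fun z => exists c : bool, if c then ~ Q z else U z)).
        by apply: op_union => -[].
      by move=> z; split; [case=> -[] ?; [left|right] | case=> ?; [exists true|exists false]].
    move=> z; split; first by case=> [nQ [Qz _]|Uz [_ nU]] //.
    move=> nB; case: (classic (Q z)) => Qz; last by left.
    by right; apply: NNPP => nU; apply: nB.
  have dAB : forall z, ~ (A z /\ B z).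
    by move=> z [[Qz nV] [_ nU]]; case: (cov z Qz).
  have [U' [V' [oU' [oV' [AU' [BV' d']]]]]] := sep_closed_closed cA cB dAB.
  have QUV : forall z, Q z -> U' z \/ V' z.
    move=> z Qz; case: (classic (V z)) => Vz.
      case: (classic (U z)) => Uz; first by case: (dis z).
      by right; apply: BV'.
    by left; apply: AU'.
  pose Z z := ~ (U' z \/ V' z).
  have cZ : closed Z.
    apply: (@op_ext (fun z => exists c : bool, if c then U' z else V' z)).
      by apply: op_union => -[].
    move=> z; split; first by case=> -[] ? nZ; apply: nZ; [left|right].
    move=> /NNPP [?|?]; by [exists true|exists false].
  pose I := {C : T -> Prop | clopen C /\ C x}.
  have [l Hl] : exists l : list I, forall y, Z y -> exists i, List.In i l /\ ~ sval i y.
    apply: (@compact_closed Z I (fun i => fun z => ~ sval i z) cZ (fun i => proj2 (proj1 (svalP i)))).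
    move=> z Zz; apply: NNPP => nE.
    have Qz : Q z.
      move=> C clC Cx; apply: NNPP => nCz; apply: nE.
      by exists (exist _ C (conj clC Cx)).
    by apply: Zz; apply: QUV.
  pose C z := forall i, List.In i l -> sval i z.
  have clC : clopen C by apply: clopen_finter => i _; case: (svalP i).
  have CUV : forall z, C z -> U' z \/ V' z.
    move=> z Cz; apply: NNPP => nUV.
    by have [i [Hi nCi]] := Hl z nUV; apply: nCi; apply: Cz.
  pose D z := C z /\ U' z.
  have clD : clopen D.
    split; first by apply: op_inter => //; case: clC.
    apply: (@op_ext (fun z => exists c : bool, if c then ~ C z else V' z)).
      by apply: op_union => -[] //; case: clC.
    move=> z; split.
      by case=> -[] H [Cz Uz] //; apply: (d' z).
    move=> nD; case: (classic (C z)) => Cz; last by exists true.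
    exists false; case: (CUV z Cz) => // Uz.
    by exfalso; apply: nD.
  have Ax : A x.
    split => // Vx; apply: (dis x); by split.
  have Dx : D x.
    split; last by apply: AU'.
    by move=> i _; case: (svalP i).
  have Bb : B b.
    split => // Ub; apply: (dis b); by split.
  have Db : D b by apply: Qb.
  by apply: (d' b); split; [case: Db|apply: BV'].
case: (cov x Qx) => Hx.
  by apply: (key U V oU oV cov dis Hx b Qb Vb).
apply: (key V U oV oU _ _ Hx a Qa Ua).
- by move=> z /cov [?|?]; [right|left].
- by move=> z [Qz [Vz Uz]]; apply: (dis z).
Qed.

Lemma clopen_basis x W : op W -> W x ->
  exists C, clopen C /\ C x /\ forall z, C z -> W z.
Proof.
move=> oW Wx.
pose I := {C : T -> Prop | clopen C /\ C x}.
have cF : closed (fun z => ~ W z).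
  by eapply op_ext; [exact: oW|] => z; split => [? ?|/NNPP].
have [l Hl] : exists l : list I, forall y, ~ W y -> exists i, List.In i l /\ ~ sval i y.
  apply: (@compact_closed (fun z => ~ W z) I (fun i => fun z => ~ sval i z) cF (fun i => proj2 (proj1 (svalP i)))).
  move=> z nWz; have xz : x <> z by move=> e; apply: nWz; rewrite -e.
  have [C [clC [Cx nCz]]] := zero_dim xz.
  by exists (exist _ C (conj clC Cx)).
exists (fun z => forall i, List.In i l -> sval i z).
split; first by apply: clopen_finter => i _; case: (svalP i).
split; first by move=> i _; case: (svalP i).
move=> z Cz; apply: NNPP => nW.
by have [i [Hi nCi]] := Hl z nW; apply: nCi; apply: Cz.
Qed.

End Topo.

Lemma zd_hausdorff T (op : (T -> Prop) -> Prop) :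
  (forall x y : T, x <> y -> exists C, clopen op C /\ C x /\ ~ C y) -> hausdorff op.
Proof.
move=> H x y /H [C [[oC cC] [Cx nCy]]].
exists C, (fun z => ~ C z); do 4 split => //.
by move=> z [].
Qed.

Lemma zd_td T (op : (T -> Prop) -> Prop) :
  (forall x y : T, x <> y -> exists C, clopen op C /\ C x /\ ~ C y) ->
  totally_disconnected op.
Proof.
move=> H S conS x y Sx Sy; apply: NNPP => /H [C [[oC cC] [Cx nCy]]].
apply: conS; exists C, (fun z => ~ C z); do 2 split => //.
split; first by move=> z _; apply: classic.
split; first by exists x.
split; first by exists y.
by move=> z [_ []].
Qed.



Section GrpLemmas.
Variable G : Grp.
Implicit Types x y z : G.

Lemma mulgV' x : x ⋆ ginv x = gone G.
Proof.
have e : ginv (ginv x) ⋆ ginv x = gone G by apply: gmulV.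
rewrite -[x ⋆ _]gmul1 -e -gmulA [ginv x ⋆ (x ⋆ _)]gmulA gmulV gmul1.
by [].
Qed.

Lemma mulg1' x : x ⋆ gone G = x.
Proof. by rewrite -(gmulV x) gmulA mulgV' gmul1. Qed.

Lemma mulKg' x y : ginv x ⋆ (x ⋆ y) = y.
Proof. by rewrite gmulA gmulV gmul1. Qed.

Lemma mulVKg' x y : x ⋆ (ginv x ⋆ y) = y.
Proof. by rewrite gmulA mulgV' gmul1. Qed.

Lemma mulgK' x y : y ⋆ x ⋆ ginv x = y.
Proof. by rewrite -gmulA mulgV' mulg1'. Qed.

Lemma mulgVK' x y : y ⋆ ginv x ⋆ x = y.
Proof. by rewrite -gmulA gmulV mulg1'. Qed.

Lemma mulg_cancl x y z : x ⋆ y = x ⋆ z -> y = z.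
Proof. by move=> e; rewrite -(mulKg' x y) e mulKg'. Qed.

Lemma mulg_cancr x y z : y ⋆ x = z ⋆ x -> y = z.
Proof. by move=> e; rewrite -(mulgK' x y) e mulgK'. Qed.

Lemma inv_uniq x y : y ⋆ x = gone G -> ginv x = y.
Proof. by move=> e; apply: (@mulg_cancr x); rewrite gmulV e. Qed.

Lemma invg_mul x y : ginv (x ⋆ y) = ginv y ⋆ ginv x.
Proof. by apply: inv_uniq; rewrite -gmulA mulKg' gmulV. Qed.

Lemma invgK x : ginv (ginv x) = x.
Proof. by apply: inv_uniq; rewrite mulgV'. Qed.

Lemma invg1 : ginv (gone G) = gone G.
Proof. by apply: inv_uniq; rewrite gmul1. Qed.

End GrpLemmas.

Section TopGrp.
Variable G : Grp.
Variable op : (G -> Prop) -> Prop.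
Hypothesis Hp : profinite_topology op.

Lemma ptop : is_topology op. Proof. by case: Hp. Qed.

Lemma lmul_cont a U : op U -> op (fun y => U (a ⋆ y)).
Proof.
case: Hp => Ht [_ [_ [_ [Hm _]]]] oU.
apply: op_local => // y Uy.
have [A [B [oA [oB [Aa [By HAB]]]]]] := Hm U oU a y Uy.
exists B; do 2 split => //.
by move=> z Bz; apply: HAB.
Qed.

Lemma rmul_cont a U : op U -> op (fun y => U (y ⋆ a)).
Proof.
case: Hp => Ht [_ [_ [_ [Hm _]]]] oU.
apply: op_local => // y Uy.
have [A [B [oA [oB [Ay [Ba HAB]]]]]] := Hm U oU y a Uy.
exists A; do 2 split => //.
by move=> z Az; apply: HAB.
Qed.

Lemma inv_cont U : op U -> op (fun y => U (ginv y)).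
Proof. by case: Hp => _ [_ [_ [_ [_ Hi]]]]; apply: Hi. Qed.

End TopGrp.

Local Open Scope ring_scope.



Lemma in_List (T : eqType) (x : T) (s : seq T) : x \in s -> List.In x s.
Proof.
elim: s => [|a s IH] //; rewrite in_cons => /orP [/eqP ->|/IH]; by [left|right].
Qed.

Section ExtBasics.
Variable G : Grp.
Variable M : finZmodType.
Variable act : G -> M -> M.
Variable H : Grp.
Variables (i : M -> H) (p : H -> G).
Hypothesis Hext : is_extension act i p.

Lemma iD x y : i (x + y) = i x ⋆ i y. Proof. by case: Hext => E _; apply: E. Qed.
Lemma i_inj x y : i x = i y -> x = y. Proof. by case: Hext => _ [E _]; apply: E. Qed.
Lemma pM a b : p (a ⋆ b) = p a ⋆ p b. Proof. by case: Hext => _ [] _ [E _]; apply: E. Qed.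
Lemma p_surj g : exists a, p a = g. Proof. by case: Hext => _ [] _ [] _ [E _]; apply: E. Qed.
Lemma p_ker a : p a = gone G <-> exists m, i m = a.
Proof. by case: Hext => _ [] _ [] _ [] _ [E _]; apply: E. Qed.
Lemma i_conj a m : i (act (p a) m) = a ⋆ i m ⋆ ginv a.
Proof. by case: Hext => _ [] _ [] _ [] _ [] _ E; apply: E. Qed.

Lemma i0 : i 0 = gone H.
Proof.
apply: (@mulg_cancl _ (i 0)); rewrite mulg1' -iD addr0 //.
Qed.

Lemma iN x : i (- x) = ginv (i x).
Proof. by symmetry; apply: inv_uniq; rewrite -iD addNr i0. Qed.

Lemma p_i m : p (i m) = gone G.
Proof. by apply/p_ker; exists m. Qed.

Lemma p1 : p (gone H) = gone G.
Proof. by rewrite -i0 p_i. Qed.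

Lemma pV a : p (ginv a) = ginv (p a).
Proof. by symmetry; apply: inv_uniq; rewrite -pM gmulV p1. Qed.

Lemma i_comm a m : a ⋆ i m = i (act (p a) m) ⋆ a.
Proof. by rewrite i_conj mulgVK'. Qed.

End ExtBasics.

Section FwdTop.
Variable G : Grp.
Variable op : (G -> Prop) -> Prop.
Variable M : finZmodType.
Variable act : G -> M -> M.
Hypothesis Hpro : profinite_topology op.
Hypothesis Hcact : continuous_action op act.
Variable H : Grp.
Variables (i : M -> H) (p : H -> G).
Hypothesis Hext : is_extension act i p.
Variables (f : G -> G -> M) (s : G -> H).
Hypothesis Hf : continuous_cochain2 op f.
Hypothesis Hps : forall g, p (s g) = g.
Hypothesis Hss : forall g h, s g ⋆ s h = i (f g h) ⋆ s (g ⋆ h).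

Let Htop := ptop Hpro.

Lemma p_is m g : p (i m ⋆ s g) = g.
Proof. by rewrite (pM Hext) (p_i Hext) Hps gmul1. Qed.

Lemma decomp a : exists m, a = i m ⋆ s (p a).
Proof.
have : p (a ⋆ ginv (s (p a))) = gone G.
  by rewrite (pM Hext) (pV Hext) Hps mulgV'.
by case/(p_ker Hext) => m e; exists m; rewrite e mulgVK'.
Qed.

Definition mc (a : H) : M := epsilon (inhabits 0) (fun m => a = i m ⋆ s (p a)).

Lemma mcE a : a = i (mc a) ⋆ s (p a).
Proof. by rewrite /mc; apply: (epsilon_spec (inhabits 0) (fun m => a = i m ⋆ s (p a))); apply: decomp. Qed.

Lemma mc_is m g : mc (i m ⋆ s g) = m.
Proof.
have e := mcE (i m ⋆ s g); rewrite p_is in e.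
by apply: (i_inj Hext); apply: (@mulg_cancr _ (s g)).
Qed.

Lemma mult_formula m g n h :
  (i m ⋆ s g) ⋆ (i n ⋆ s h) = i (m + act g n + f g h) ⋆ s (g ⋆ h).
Proof.
rewrite !(iD Hext) -[_ ⋆ i (f g h) ⋆ _]gmulA -Hss !gmulA.
by rewrite -[i m ⋆ s g ⋆ i n]gmulA (i_comm Hext) Hps !gmulA.
Qed.

Lemma s1 : s (gone G) = i (f (gone G) (gone G)).
Proof.
apply: (@mulg_cancr _ (s (gone G))).
by rewrite Hss gmul1.
Qed.

Definition phiinv m g := - act (ginv g) m - f (ginv g) g - f (gone G) (gone G).

Lemma inv_formula m g : ginv (i m ⋆ s g) = i (phiinv m g) ⋆ s (ginv g).
Proof.
apply: inv_uniq; rewrite mult_formula gmulV s1 -(iD Hext) /phiinv.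
rewrite -(i0 Hext); congr (i _).
by rewrite -!opprD -!addrA addNr.
Qed.

Definition opH (W : H -> Prop) : Prop := forall m, op (fun g => W (i m ⋆ s g)).

Lemma opH_sheet m (P : G -> Prop) : op P -> opH (fun a => mc a = m /\ P (p a)).
Proof.
move=> oP m'; case: (classic (m' = m)) => [<-|ne].
  by eapply op_ext; [exact: oP|] => g /=; rewrite mc_is p_is; split => [?|[]].
by eapply op_ext; [apply: (op_False Htop)|] => g /=; rewrite mc_is; split => [[]|[]].
Qed.

Lemma opH_pull (P : G -> Prop) : op P -> opH (fun a => P (p a)).
Proof.
by move=> oP m; eapply op_ext; [exact: oP|] => g /=; rewrite p_is.
Qed.

Lemma opH_nsheet m : opH (fun a => mc a <> m).
Proof.
move=> m'; case: (classic (m' = m)) => [<-|ne].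
  by eapply op_ext; [apply: (op_False Htop)|] => g /=; rewrite mc_is.
by eapply op_ext; [apply: (op_True Htop)|] => g /=; rewrite mc_is.
Qed.

Lemma eq_coords a b : mc a = mc b -> p a = p b -> a = b.
Proof. by move=> e1 e2; rewrite (mcE a) (mcE b) e1 e2. Qed.

Lemma opH_top : is_topology opH.
Proof.
split; first by move=> m; apply: (op_True Htop).
split; first by move=> m; apply: (op_False Htop).
split; first by move=> I U HU m; apply: (op_union Htop) => // j; apply: HU.
by move=> U V oU oV m; apply: (op_inter Htop).
Qed.

Lemma opH_compact : compact opH.
Proof.
move=> I U oU cov.
have Hl : forall m, exists l : list I, forall g, exists j, List.In j l /\ U j (i m ⋆ s g).
  move=> m; case: Hpro => _ [Hc _].
  by apply: Hc => [j|g]; [apply: oU|apply: cov].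
pose L m := proj1_sig (constructive_indefinite_description _ (Hl m)).
have HL m : forall g, exists j, List.In j (L m) /\ U j (i m ⋆ s g).
  exact: (proj2_sig (constructive_indefinite_description _ (Hl m))).
exists (List.concat (List.map L (enum M))).
move=> x; have [j [Hj Uj]] := HL (mc x) (p x).
exists j; split; last by rewrite (mcE x).
apply/List.in_concat; exists (L (mc x)); split => //.
apply: List.in_map; apply: in_List; by rewrite mem_enum.
Qed.

Lemma opH_hausdorff : hausdorff opH.
Proof.
move=> x y xy.
case: (classic (p x = p y)) => epxy.
  have emc : mc x <> mc y by move=> e; apply: xy; apply: eq_coords.
  exists (fun a => mc a = mc x /\ True), (fun a => mc a = mc y /\ True).
  split; first by apply: (@opH_sheet _ (fun _ => True)); apply: (op_True Htop).
  split; first by apply: (@opH_sheet _ (fun _ => True)); apply: (op_True Htop).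
  do 2 split => //.
  by move=> z [[-> _] [e _]].
case: Hpro => _ [_ [Hh _]].
have [U [V [oU [oV [Ux [Vy d]]]]]] := Hh _ _ epxy.
exists (fun a => U (p a)), (fun a => V (p a)).
split; first exact: opH_pull.
split; first exact: opH_pull.
by do 2 split => //; move=> z; apply: d.
Qed.

Lemma opH_td : totally_disconnected opH.
Proof.
move=> S conS x y Sx Sy.
have epxy : p x = p y.
  case: Hpro => _ [_ [_ [Htd _]]].
  apply: (Htd (fun g => exists a, S a /\ p a = g)); [|by exists x|by exists y].
  move=> [U [V [oU [oV [cov [[g [[a [Sa <-]] Ua]] [[h [[b [Sb <-]] Vb]] dis]]]]]]].
  apply: conS; exists (fun a => U (p a)), (fun a => V (p a)).
  split; first exact: opH_pull.
  split; first exact: opH_pull.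
  split; first by move=> c Sc; apply: cov; exists c.
  split; first by exists a.
  split; first by exists b.
  by move=> c [Sc [Uc Vc]]; apply: (dis (p c)); split => //; exists c.
apply: eq_coords => //; apply: NNPP => ne.
apply: conS; exists (fun a => mc a = mc x /\ True), (fun a => mc a <> mc x).
split; first by apply: (@opH_sheet _ (fun _ => True)); apply: (op_True Htop).
split; first exact: opH_nsheet.
split; first by move=> c _; case: (classic (mc c = mc x)); [left|right].
split; first by exists x.
split; first by exists y; split => // e; apply: ne.
by move=> c [_ [[e _] ne']].
Qed.

Lemma opH_mul : forall U, opH U -> prod_open opH opH (fun x y => U (x ⋆ y)).
Proof.
move=> W oW x y Wxy.
set m := mc x; set g := p x; set n := mc y; set h := p y.
pose k := m + act g n + f g h.
have exy : x ⋆ y = i k ⋆ s (g ⋆ h) by rewrite {1}(mcE x) {1}(mcE y) mult_formula.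
pose R z := W (i k ⋆ s z).
have oR : op R by apply: oW.
have Rgh : R (g ⋆ h) by rewrite /R -exy.
case: Hpro => _ [_ [_ [_ [Hm _]]]].
have [A1 [B1 [oA1 [oB1 [A1g [B1h H1]]]]]] := Hm R oR g h Rgh.
have [A2 [B2 [oA2 [oB2 [A2g [B2h H2]]]]]] := Hf (erefl (f g h)).
pose A3 g' := act g' n = act g n.
have oA3 : op A3 by apply: Hcact.
exists (fun a => mc a = m /\ (A1 (p a) /\ A2 (p a) /\ A3 (p a))).
exists (fun b => mc b = n /\ (B1 (p b) /\ B2 (p b))).
split; first by apply: (@opH_sheet m (fun g' => A1 g' /\ A2 g' /\ A3 g')); do 2! apply: (op_inter Htop) => //.
split; first by apply: (@opH_sheet n (fun g' => B1 g' /\ B2 g')); apply: (op_inter Htop).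
split; first by split => //; do 2! split => //.
split; first by split => //; split.
move=> a b [ea [Aa1 [Aa2 Aa3]]] [eb [Bb1 Bb2]].
rewrite (mcE a) (mcE b) mult_formula ea eb Aa3 (H2 _ _ Aa2 Bb2).
by apply: H1.
Qed.

Lemma opH_inv : forall U, opH U -> opH (fun x => U (ginv x)).
Proof.
move=> W oW m.
apply: (op_local Htop) => // g Wg.
have e0 : forall g', W (ginv (i m ⋆ s g')) = W (i (phiinv m g') ⋆ s (ginv g')).
  by move=> g'; rewrite inv_formula.
pose R z := W (i (phiinv m g) ⋆ s z).
have oR : op R by apply: oW.
have oR' : op (fun g' => R (ginv g')) by apply: (inv_cont Hpro).
have oA : op (fun g' => act (ginv g') m = act (ginv g) m).
  by apply: (@inv_cont _ _ Hpro (fun z => act z m = act (ginv g) m)); apply: Hcact.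
have [A2 [B2 [oA2 [oB2 [A2g [B2h H2]]]]]] := Hf (erefl (f (ginv g) g)).
have oA2' : op (fun g' => A2 (ginv g')) by apply: (inv_cont Hpro).
exists (fun g' => (R (ginv g') /\ act (ginv g') m = act (ginv g) m) /\ (B2 g' /\ A2 (ginv g'))).
split; first by do 2! apply: (op_inter Htop) => //.
split; first by rewrite /R -e0.
move=> g' [[Rg' Ag'] [Bg' Ag2']].
rewrite /= e0.
suff -> : phiinv m g' = phiinv m g by [].
by rewrite /phiinv Ag' (H2 _ _ Ag2' Bg').
Qed.

Lemma opH_profinite : profinite_topology opH.
Proof.
split; first exact: opH_top.
split; first exact: opH_compact.
split; first exact: opH_hausdorff.
split; first exact: opH_td.
split; first exact: opH_mul.
exact: opH_inv.
Qed.

End FwdTop.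



Lemma zid1 (M : zmodType) (x y z F : M) : -x - y + (F + (y - z + x)) = F - z.
Proof.
rewrite (addrC F) -opprD.
have -> : y - z + x + F = (x + y) + (F - z).
  by rewrite (addrAC y) (addrAC (y + x)) (addrC y x) addrA.
by rewrite addKr.
Qed.

Lemma zid2 (M : zmodType) (a b c d : M) : a + c = d + b -> a - b + c - d = 0.
Proof. by move=> E; rewrite (addrAC a) E addrK subrr. Qed.

Section ModLemmas.
Variable G : Grp.
Variable M : finZmodType.
Variable act : G -> M -> M.
Hypothesis Hmod : is_Gmodule act.

Lemma actD g x y : act g (x + y) = act g x + act g y.
Proof. by case: Hmod => E _; apply: E. Qed.
Lemma act1 x : act (gone G) x = x.
Proof. by case: Hmod => _ [E _]; apply: E. Qed.
Lemma actM g h x : act (g ⋆ h) x = act g (act h x).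
Proof. by case: Hmod => _ [_ E]; apply: E. Qed.
Lemma act0 g : act g 0 = 0.
Proof. by apply: (@addrI _ (act g 0)); rewrite -actD !addr0. Qed.
Lemma actN g x : act g (- x) = - act g x.
Proof. by apply: (@addrI _ (act g x)); rewrite -actD !subrr act0. Qed.
End ModLemmas.

Section FwdSec.
Variable G : Grp.
Variable op : (G -> Prop) -> Prop.
Variable M : finZmodType.
Variable act : G -> M -> M.
Hypothesis Hmod : is_Gmodule act.
Hypothesis Hphi : phi2_surjective op act.
Variable H : Grp.
Variables (i : M -> H) (p : H -> G).
Hypothesis Hext : is_extension act i p.

Let s0 g := proj1_sig (constructive_indefinite_description _ (p_surj Hext g)).
Let ps0 g : p (s0 g) = g := proj2_sig (constructive_indefinite_description _ (p_surj Hext g)).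

Definition kinv (a : H) : M := epsilon (inhabits 0) (fun m => i m = a).
Lemma kinvE a : p a = gone G -> i (kinv a) = a.
Proof.
move=> /(p_ker Hext) ex.
exact: (epsilon_spec (inhabits 0) (fun m => i m = a) ex).
Qed.

Let f0 g h := kinv (s0 g ⋆ s0 h ⋆ ginv (s0 (g ⋆ h))).

Lemma Hss0 g h : s0 g ⋆ s0 h = i (f0 g h) ⋆ s0 (g ⋆ h).
Proof.
rewrite /f0 kinvE ?mulgVK' //.
by rewrite !(pM Hext) (pV Hext) !ps0 mulgV'.
Qed.

Lemma f0_cocycle : cocycle2 act f0.
Proof.
move=> g h k.
have e1 : s0 g ⋆ s0 h ⋆ s0 k = i (f0 g h + f0 (g ⋆ h) k) ⋆ s0 (g ⋆ h ⋆ k).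
  by rewrite Hss0 -gmulA Hss0 gmulA -(iD Hext).
have e2 : s0 g ⋆ s0 h ⋆ s0 k = i (act g (f0 h k) + f0 g (h ⋆ k)) ⋆ s0 (g ⋆ h ⋆ k).
  rewrite -gmulA Hss0 gmulA (i_comm Hext) ps0 -gmulA Hss0 gmulA -(iD Hext).
  by rewrite gmulA.
have := e1; rewrite e2 => /mulg_cancr /(i_inj Hext) E.
by apply: zid2; rewrite E.
Qed.

Lemma fwd_section : exists (f : G -> G -> M) (s : G -> H),
  continuous_cochain2 op f /\ (forall g, p (s g) = g) /\
  (forall g h, s g ⋆ s h = i (f g h) ⋆ s (g ⋆ h)).
Proof.
have [f' [c [cf' [_ Hdec]]]] := Hphi f0_cocycle.
exists f', (fun g => i (- c g) ⋆ s0 g).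
split => //.
split; first by move=> g; rewrite (pM Hext) (p_i Hext) ps0 gmul1.
move=> g h.
rewrite gmulA -[i (- c g) ⋆ s0 g ⋆ i (- c h)]gmulA (i_comm Hext) ps0 !gmulA.
rewrite -[_ ⋆ s0 g ⋆ s0 h]gmulA Hss0 !gmulA -!(iD Hext).
congr (_ ⋆ _); congr (i _).
by rewrite Hdec /coboundary1 (actN Hmod) zid1.
Qed.

End FwdSec.

Lemma forward (G : Grp) (op : (G -> Prop) -> Prop) (M : finZmodType) (act : G -> M -> M) :
  profinite_topology op -> is_Gmodule act -> continuous_action op act ->
  phi2_surjective op act -> every_extension_profinite_type act.
Proof.
move=> Hpro Hmod Hcact Hphi H i p Hext.
have [f [s [cf [Hps Hss]]]] := fwd_section Hmod Hphi Hext.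
exists (opH op i s).
exact: (opH_profinite Hpro Hcact Hext cf Hps Hss).
Qed.



Lemma zid3 (M : zmodType) (m A B W X Y Z : M) :
  X - Y + Z - W = 0 -> m + A + W + B + Y = m + (A + B + X) + Z.
Proof.
move=> E.
have E' : X + Z = W + Y.
  by apply/eqP; rewrite -subr_eq0 opprD addrA (addrAC (X + Z)) (addrAC X) E.
by rewrite !addrA -(addrA _ X Z) E' addrA (addrAC (m + A) W B).
Qed.

Section Ext.
Variable G : Grp.
Variable M : finZmodType.
Variable act : G -> M -> M.
Hypothesis Hmod : is_Gmodule act.
Variable f : G -> G -> M.
Hypothesis Hcoc : cocycle2 act f.

Lemma f1k k : f (gone G) k = f (gone G) (gone G).
Proof.
have := Hcoc (gone G) (gone G) k.
rewrite !gmul1 (act1 Hmod) subrr add0r => /eqP.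
by rewrite subr_eq0 => /eqP.
Qed.

Lemma fg1 g : f g (gone G) = act g (f (gone G) (gone G)).
Proof.
have := Hcoc g (gone G) (gone G).
rewrite !mulg1' addrNK => /eqP.
by rewrite subr_eq0 => /eqP ->.
Qed.

Definition eH : M := - f (gone G) (gone G).

Definition hmul (x y : M * G) : M * G := (x.1 + act x.2 y.1 + f x.2 y.2, x.2 ⋆ y.2).
Definition hone : M * G := (eH, gone G).
Definition hinv (x : M * G) : M * G :=
  (eH - act (ginv x.2) x.1 - f (ginv x.2) x.2, ginv x.2).

Lemma hmulA x y z : hmul x (hmul y z) = hmul (hmul x y) z.
Proof.
case: x => m g; case: y => n h; case: z => l k; rewrite /hmul /=.
congr (_, _); last by rewrite gmulA.
rewrite (actM Hmod) !(actD Hmod).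
by symmetry; apply: zid3; apply: Hcoc.
Qed.

Lemma hmul1 x : hmul hone x = x.
Proof.
case: x => m g; rewrite /hmul /hone /= gmul1 (act1 Hmod) f1k /eH.
by rewrite addrC addNKr.
Qed.

Lemma hmulV x : hmul (hinv x) x = hone.
Proof.
case: x => m g; rewrite /hmul /hinv /hone /= gmulV.
by rewrite (addrAC (eH - _)) addrNK addrNK.
Qed.

Definition Hf : Grp := {| gcarrier := (M * G)%type; gmul := hmul; gone := hone;
  ginv := hinv; gmulA := hmulA; gmul1 := hmul1; gmulV := hmulV |}.

Definition iH (m : M) : Hf := (m + eH, gone G).
Definition pH (a : Hf) : G := a.2.

Lemma iH_mul k (a : Hf) : iH k ⋆ a = (k + a.1, a.2).
Proof.
case: a => n g; rewrite /= /hmul /iH /= gmul1 (act1 Hmod) f1k /eH.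
by rewrite (addrAC k) addrNK.
Qed.

Lemma Hf_ext : is_extension act iH pH.
Proof.
split.
  by move=> x y; rewrite iH_mul /iH /= addrA.
split.
  by move=> x y [] /addIr.
split; first by [].
split; first by move=> g; exists (0, g).
split.
  move=> [n g] /=; split => [e|[m e]]; last by case: e => _ <-.
  by exists (n - eH); rewrite /iH subrK e.
move=> [n g] m.
have -> : ((n, g) : gcarrier Hf) ⋆ iH m = iH (act g m) ⋆ ((n, g) : gcarrier Hf).
  rewrite iH_mul /= /hmul /iH /= mulg1' fg1 (actD Hmod) /eH (actN Hmod).
  by rewrite addrA addrNK addrC.
by rewrite mulgK'.
Qed.

End Ext.



Lemma op_or T (op : (T -> Prop) -> Prop) (Ht : is_topology op) U V :
  op U -> op V -> op (fun x => U x \/ V x).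
Proof.
move=> oU oV.
apply: (@op_ext T op (fun x => exists b : bool, if b then U x else V x)).
  by apply: (op_union Ht) => -[].
move=> x; split; first by case=> -[]; [left|right].
by case=> H; [exists true|exists false].
Qed.

Lemma op_const T (op : (T -> Prop) -> Prop) (Ht : is_topology op) (P : Prop) :
  op (fun _ => P).
Proof.
case: (classic P) => HP.
  by eapply op_ext; [apply: (op_True Ht)|].
by eapply op_ext; [apply: (op_False Ht)|].
Qed.

Lemma isolate (X : Type) (tau : (X -> Prop) -> Prop) (Ht : is_topology tau)
  (Hh : hausdorff tau) (M : finType) (j : M -> X)
  (jinj : forall x y, j x = j y -> x = y) (m : M) :
  exists W, tau W /\ W (j m) /\ forall k, W (j k) -> k = m.
Proof.
have Hs : forall k, exists U, tau U /\ U (j m) /\ (k <> m -> ~ U (j k)).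
  move=> k; case: (classic (k = m)) => [->|ne].
    exists (fun _ => True); split; first exact: (op_True Ht).
    by split.
  have jne : j m <> j k by move=> /jinj e; apply: ne.
  have [U [V [oU [oV [Um [Vk d]]]]]] := Hh _ _ jne.
  exists U; do 2 split => //; move=> _ Uk; apply: (d (j k)); by split.
pose U k := proj1_sig (constructive_indefinite_description _ (Hs k)).
have HU k : tau (U k) /\ U k (j m) /\ (k <> m -> ~ U k (j k)) :=
  proj2_sig (constructive_indefinite_description _ (Hs k)).
exists (fun x => forall k, List.In k (enum M) -> U k x).
split; first by apply: (op_finter Ht) => k _; case: (HU k).
split; first by move=> k _; case: (HU k) => _ [].
move=> k Wk; apply: NNPP => ne.
case: (HU k) => _ [_ /(_ ne)]; apply; apply: Wk; apply: in_List.
by rewrite mem_enum.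
Qed.

Lemma section_cocycle (G : Grp) (M : finZmodType) (act : G -> M -> M) (H : Grp)
  (i : M -> H) (p : H -> G) (Hext : is_extension act i p)
  (F : G -> G -> M) (s : G -> H) :
  (forall g, p (s g) = g) -> (forall g h, s g ⋆ s h = i (F g h) ⋆ s (g ⋆ h)) ->
  cocycle2 act F.
Proof.
move=> ps Hss g h k.
have e1 : s g ⋆ s h ⋆ s k = i (F g h + F (g ⋆ h) k) ⋆ s (g ⋆ h ⋆ k).
  by rewrite Hss -gmulA Hss gmulA -(iD Hext).
have e2 : s g ⋆ s h ⋆ s k = i (act g (F h k) + F g (h ⋆ k)) ⋆ s (g ⋆ h ⋆ k).
  rewrite -gmulA Hss gmulA (i_comm Hext) ps -gmulA Hss gmulA -(iD Hext).
  by rewrite gmulA.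
have := e1; rewrite e2 => /mulg_cancr /(i_inj Hext) E.
by apply: zid2; rewrite E.
Qed.

Lemma zid4 (M : zmodType) (a b F d : M) : F = a + b + F - d + (- b - - d + - a).
Proof.
by rewrite opprK (addrAC (-b)) -opprD (addrC b) addrA (addrAC (a + b + F)) (addrAC (a + b) F) subrr add0r addrNK.
Qed.

Section Back.
Variable G : Grp.
Variable op : (G -> Prop) -> Prop.
Variable M : finZmodType.
Variable act : G -> M -> M.
Hypothesis Hpro : profinite_topology op.
Hypothesis Hrig : forall op', profinite_topology op' -> forall U, op' U <-> op U.
Hypothesis Hmod : is_Gmodule act.
Variable f : G -> G -> M.
Hypothesis Hcoc : cocycle2 act f.
Local Notation HF := (Hf Hmod Hcoc).
Local Notation ih := (iH Hmod Hcoc).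
Variable tau : (gcarrier HF -> Prop) -> Prop.
Hypothesis Htau : profinite_topology tau.

Let Ht := ptop Htau.
Let Hop := ptop Hpro.
Let Hext := Hf_ext Hmod Hcoc.

Lemma img_open (A : HF -> Prop) : tau A -> tau (fun a : HF => exists m, A (m, a.2)).
Proof.
move=> oA.
apply: (@op_ext _ tau (fun a => exists k, A (ih k ⋆ a))).
  by apply: (op_union Ht) => k; apply: (lmul_cont Htau).
move=> a; split.
  by case=> k; rewrite iH_mul => Ak; exists (k + a.1).
by case=> m Am; exists (m - a.1); rewrite iH_mul subrK.
Qed.

Definition op2 (V : G -> Prop) : Prop := tau (fun a : HF => V a.2).

Lemma op2_top : is_topology op2.
Proof.
split; first exact: (op_True Ht).
split; first exact: (op_False Ht).
split; first by move=> I U HU; apply: (op_union Ht).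
by move=> U V oU oV; apply: (op_inter Ht).
Qed.

Lemma op2_compact : compact op2.
Proof.
move=> I U oU cov.
case: Htau => _ [Hc _].
have [l Hl] := Hc I (fun j (a : HF) => U j a.2) oU (fun a => cov a.2).
by exists l => g; have [j [Hj Uj]] := Hl ((0, g) : HF); exists j.
Qed.

Lemma op2_zd g g' : g <> g' -> exists C, clopen op2 C /\ C g /\ ~ C g'.
Proof.
move=> ne.
case: Htau => _ [Hc [Hh [Htd _]]].
have Hs : forall mm : M * M, exists C, clopen tau C /\ C ((mm.1, g) : HF) /\ ~ C ((mm.2, g') : HF).
  move=> [m m']; apply: (zero_dim Ht Hc Hh Htd) => e; apply: ne.
  by case: e.
pose C mm := proj1_sig (constructive_indefinite_description _ (Hs mm)).
have HC mm : clopen tau (C mm) /\ C mm ((mm.1, g) : HF) /\ ~ C mm ((mm.2, g') : HF) :=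
  proj2_sig (constructive_indefinite_description _ (Hs mm)).
pose D (a : HF) := exists m, List.In m (enum M) /\
   forall m', List.In m' (enum M) -> C (m, m') a.
have clD : clopen tau D.
  apply: (clopen_funion Ht) => m _; apply: (clopen_finter Ht) => m' _.
  by case: (HC (m, m')).
have inE : forall m : M, List.In m (enum M) by move=> m; apply: in_List; rewrite mem_enum.
have Dg : forall m, D ((m, g) : HF).
  move=> m; exists m; split => // m' _.
  by case: (HC (m, m')) => _ [].
have nDg' : forall m', ~ D ((m', g') : HF).
  move=> m' [m [_ Hm]].
  by case: (HC (m, m')) => _ [_]; apply; apply: Hm.
pose E (a : HF) := forall k, List.In k (enum M) -> D (ih k ⋆ a).
have clE : clopen tau E.
  apply: (clopen_finter Ht) => k _; case: clD => oD cD; split.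
    exact: (lmul_cont Htau).
  exact: (@lmul_cont _ _ Htau (ih k) (fun b => ~ D b) cD).
have E_iff : forall a : HF, E a <-> forall m, D ((m, a.2) : HF).
  move=> a; split.
    move=> Ea m; have := Ea (m - a.1) (inE _).
    by rewrite iH_mul subrK.
  by move=> Da k _; rewrite iH_mul; apply: Da.
exists (fun x => forall m, D ((m, x) : HF)).
split.
  case: clE => oE cE; split.
    by rewrite /op2; eapply op_ext; [exact: oE|] => a; apply: E_iff.
  rewrite /closed /op2; eapply op_ext; [exact: cE|] => a.
  by split => H1 H2; apply: H1; apply/E_iff.
split; first exact: Dg.
by move=> H; apply: (nDg' 0); apply: H.
Qed.

Lemma op2_mul U : op2 U -> prod_open op2 op2 (fun x y => U (x ⋆ y)).
Proof.
move=> oU g h Ugh.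
case: Htau => _ [_ [_ [_ [Hm _]]]].
have [A [B [oA [oB [Aa [Bb HAB]]]]]] :=
  Hm (fun a : HF => U a.2) oU ((0, g) : HF) ((0, h) : HF) Ugh.
exists (fun g' => exists m, A ((m, g') : HF)), (fun h' => exists m, B ((m, h') : HF)).
split; first exact: img_open.
split; first exact: img_open.
split; first by exists 0.
split; first by exists 0.
by move=> g' h' [m Am] [n Bn]; apply: (HAB _ _ Am Bn).
Qed.

Lemma op2_inv U : op2 U -> op2 (fun x => U (ginv x)).
Proof. by move=> oU; apply: (inv_cont Htau oU). Qed.

Lemma op2_prof : profinite_topology op2.
Proof.
split; first exact: op2_top.
split; first exact: op2_compact.
split; first by apply: zd_hausdorff; apply: op2_zd.
split; first by apply: zd_td; apply: op2_zd.
split; first exact: op2_mul.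
exact: op2_inv.
Qed.

Lemma img_op (A : HF -> Prop) : tau A -> op (fun g => exists m, A ((m, g) : HF)).
Proof. by move=> oA; apply/(Hrig op2_prof); apply: img_open. Qed.

Definition finj (U : HF -> Prop) := forall a b : HF, U a -> U b -> a.2 = b.2 -> a = b.

Lemma local_nbhd g0 : exists U, tau U /\ (exists m, U ((m, g0) : HF)) /\ finj U.
Proof.
case: Htau => _ [_ [Hh [_ [Hm Hi]]]].
have ih_inj : forall x y, ih x = ih y -> x = y := i_inj Hext.
have [W [oW [W0 HW]]] := isolate Ht Hh ih_inj 0.
pose a0 : HF := (0, g0).
have e0 : ih 0 = a0 ⋆ ginv a0 by rewrite mulgV' (i0 Hext).
have W1 : W (a0 ⋆ ginv a0) by rewrite -e0.
have [A [B [oA [oB [Aa [Bb HAB]]]]]] := Hm W oW a0 (ginv a0) W1.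
exists (fun a => A a /\ B (ginv a)).
split; first by apply: (op_inter Ht) => //; exact: (inv_cont Htau).
split; first by exists 0.
move=> a b [Aa' Ba'] [Ab' Bb'] e.
have ea : a = ih (a.1 - b.1) ⋆ b.
  by rewrite iH_mul subrK -e; case: (a).
have := HAB _ _ Aa' Bb'; rewrite {1}ea mulgK' => /HW /eqP; rewrite subr_eq0 => /eqP e1.
by move: e1 e; case: (a); case: (b) => /= ? ? ? ? -> ->.
Qed.

Definition loc (U : HF -> Prop) (g : G) : M :=
  epsilon (inhabits 0) (fun m => U ((m, g) : HF)).

Lemma locP U g : (exists m, U ((m, g) : HF)) -> U ((loc U g, g) : HF).
Proof. by move=> ex; apply: (epsilon_spec (inhabits 0) (fun m => U ((m, g) : HF)) ex). Qed.

Lemma loc_cont U : tau U -> finj U -> forall W, tau W ->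
  op (fun g => (exists m, U ((m, g) : HF)) /\ W ((loc U g, g) : HF)).
Proof.
move=> oU fU W oW.
eapply op_ext; [apply: (img_op (A := fun a => U a /\ W a)); exact: (op_inter Ht)|].
move=> g; split.
  case=> m [Um Wm]; split; first by exists m.
  have ex : exists m, U ((m, g) : HF) by exists m.
  by have := fU _ _ Um (@locP U g ex) erefl; case=> <-.
case=> ex Wl; exists (loc U g); split => //; exact: locP.
Qed.

Definition Ipiece := {q : (G -> Prop) * (HF -> Prop) | clopen op q.1 /\ tau q.2 /\
   finj q.2 /\ forall g, q.1 g -> exists m, q.2 ((m, g) : HF)}.

Lemma pieces_cover g0 : exists j : Ipiece, (sval j).1 g0.
Proof.
have [U [oU [[m Um] fU]]] := local_nbhd g0.
have oV : op (fun g => exists m, U ((m, g) : HF)) := img_op oU.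
case: Hpro => _ [Hc [Hh [Htd _]]].
have ex : exists m, U ((m, g0) : HF) by exists m.
have [C [clC [Cg0 CV]]] := clopen_basis Hop Hc Hh Htd oV ex.
by exists (exist _ (C, U) (conj clC (conj oU (conj fU CV)))).
Qed.

Fixpoint pick (l : list Ipiece) (g : G) : option Ipiece :=
  match l with
  | nil => None
  | j :: l' => if excluded_middle_informative ((sval j).1 g) then Some j else pick l' g
  end.

Lemma pick_some l g j : pick l g = Some j -> (sval j).1 g.
Proof.
elim: l => [|j0 l IH] //=.
by case: excluded_middle_informative => [H [<-]|_ /IH].
Qed.

Lemma pick_cover l g : (exists j, List.In j l /\ (sval j).1 g) -> exists j, pick l g = Some j.
Proof.
elim: l => [|j0 l IH] [j [Hj Cj]] //=.
case: excluded_middle_informative => H; first by exists j0.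
apply: IH; exists j; split => //.
by case: Hj => [e|//]; rewrite e in H.
Qed.

Lemma pick_open l j : op (fun g => pick l g = Some j).
Proof.
elim: l => [|j0 l IH] /=.
  by eapply op_ext; [apply: (op_False Hop)|].
apply: (@op_ext _ op (fun g => ((sval j0).1 g /\ j0 = j) \/ (~ (sval j0).1 g /\ pick l g = Some j))).
  apply: (op_or Hop); apply: (op_inter Hop) => //.
  - by case: (svalP j0) => -[].
  - exact: (op_const Hop).
  - by case: (svalP j0) => -[].
move=> g; case: excluded_middle_informative => H /=; split.
- by case=> [[_ e]|[]] //; congr Some.
- by case=> e; left.
- by case=> [[]|[]].
- by move=> e; right.
Qed.

Section Glue.
Variable L : list Ipiece.
Hypothesis HL : forall g, exists j, List.In j L /\ (sval j).1 g.

Definition cp (g : G) : M :=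
  match pick L g with Some j => loc (sval j).2 g | None => 0 end.

Definition sg (g : G) : HF := (cp g, g).

Lemma sg_cont W : tau W -> op (fun g => W (sg g)).
Proof.
move=> oW; apply: (op_local Hop) => g Wg.
have [j ej] := pick_cover (HL g).
have Cj := pick_some ej.
case: (svalP j) => clC [oU [fU cov]].
exists (fun g' => pick L g' = Some j /\
   ((exists m, (sval j).2 ((m, g') : HF)) /\ W ((loc (sval j).2 g', g') : HF))).
split; first by apply: (op_inter Hop); [exact: pick_open|exact: loc_cont].
split.
  split => //; split; first exact: cov.
  by move: Wg; rewrite /sg /cp ej.
by move=> g' [e' [_ W']]; rewrite /sg /cp e'.
Qed.

Definition fp (g h : G) : M := cp g + act g (cp h) + f g h - cp (g ⋆ h).

Lemma sg_rel g h : sg g ⋆ sg h = ih (fp g h) ⋆ sg (g ⋆ h).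
Proof. by rewrite iH_mul /fp subrK. Qed.

Lemma fp_cocycle : cocycle2 act fp.
Proof. by apply: (section_cocycle Hext (s := sg)) => // g h; apply: sg_rel. Qed.

Lemma fp_dec g h : f g h = fp g h + coboundary1 act (fun g => - cp g) g h.
Proof. by rewrite /fp /coboundary1 (actN Hmod); apply: zid4. Qed.

Lemma fp_cont : continuous_cochain2 op fp.
Proof.
move=> m g h e.
case: Htau => _ [_ [Hh [_ [Hm _]]]].
have [W [oW [Wm HW]]] := isolate Ht Hh (i_inj Hext) m.
have rel : forall g h, sg g ⋆ sg h ⋆ ginv (sg (g ⋆ h)) = ih (fp g h).
  by move=> g' h'; rewrite sg_rel mulgK'.
have W0 : W (sg g ⋆ sg h ⋆ ginv (sg (g ⋆ h))) by rewrite rel e.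
have [A [B [oA [oB [Aa [Bb HAB]]]]]] := Hm W oW _ _ W0.
have [A1 [A2 [oA1 [oA2 [A1g [A2h H12]]]]]] := Hm A oA _ _ Aa.
have oB' : tau (fun a => B (ginv a)) := inv_cont Htau oB.
have oR : op (fun z => B (ginv (sg z))) := sg_cont oB'.
case: Hpro => _ [_ [_ [_ [HmG _]]]].
have [P2 [Q2 [oP2 [oQ2 [P2g [Q2h HPQ]]]]]] := HmG _ oR g h Bb.
exists (fun g' => A1 (sg g') /\ P2 g'), (fun h' => A2 (sg h') /\ Q2 h').
split; first by apply: (op_inter Hop) => //; exact: sg_cont.
split; first by apply: (op_inter Hop) => //; exact: sg_cont.
split; first by split.
split; first by split.
move=> g' h' [A1' P2'] [A2' Q2'].
apply: HW; rewrite -rel; apply: HAB; [apply: H12 => // | apply: HPQ => //].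
Qed.

End Glue.

Lemma back_main : exists (f' : G -> G -> M) (c : G -> M),
      continuous_cochain2 op f' /\ cocycle2 act f' /\
      forall g h, f g h = f' g h + coboundary1 act c g h.
Proof.
have [L HL] : exists L : list Ipiece, forall g, exists j, List.In j L /\ (sval j).1 g.
  case: Hpro => _ [Hc _].
  apply: (Hc Ipiece (fun j => (sval j).1)); last exact: pieces_cover.
  by move=> j; case: (svalP j) => -[].
exists (fp L), (fun g => - cp L g).
split; first exact: fp_cont.
split; first exact: fp_cocycle.
exact: fp_dec.
Qed.

End Back.

Lemma backward (G : Grp) (op : (G -> Prop) -> Prop) (M : finZmodType) (act : G -> M -> M) :
  profinitely_rigid op -> is_Gmodule act ->
  every_extension_profinite_type act -> phi2_surjective op act.
Proof.
move=> [Hpro Hrig] Hmod Hall f Hcoc.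
have [tau Htau] := Hall _ _ _ (Hf_ext Hmod Hcoc).
exact: (back_main Hpro Hrig Htau).
Qed.


Theorem mainTheorem18 (G : Grp) (op : (G -> Prop) -> Prop)
  (M : finZmodType) (act : G -> M -> M) :
  profinitely_rigid op ->
  is_Gmodule act ->
  continuous_action op act ->
  (phi2_surjective op act <-> every_extension_profinite_type act).
Proof.
move=> Hrig Hmod Hcact; split.
  by apply: forward => //; case: Hrig.
exact: backward.
Qed.
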